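(* Let $k\ge4$. For each even natural number $v$ let $\Delta_v$ denote the unique positive solution of $\Delta_v e^{\Delta_v/k}=ke^{1-v/k}$, and put $\tau(k)=\max_{w\in\mathbb N}(k-2\Delta_{2w})/(4w^2)$. Then \[ \tau(k)\ge\frac{1}{9.027901\,k}\qquad\text{and}\qquad \tau(k)\ge\frac{1-2/\omega}{(1-1/\omega+\log\omega+2/k)^2\,k}, \] where $\omega$ is the unique real solution with $\omega\ge1$ of $\omega-2-1/\omega=\log\omega$.
   Context: $\log$ denotes the natural logarithm. (For even $v$ and $k\ge4$, the numbers $\Delta_v$ defined here are admissible exponents for $k$ in the sense of mean values of smooth Weyl sums, so $\tau(k)$ is the quantity entering the minor arc bounds; the claim itself concerns only the numbers so defined.) *)

(* Defs.v *)
From Stdlib Require Import Reals ClassicalEpsilon.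
Open Scope R_scope.

Definition Delta (k v : nat) : R :=
  epsilon (inhabits 0%R)
    (fun D => 0 < D /\ D * exp (D / INR k) = INR k * exp (1 - INR v / INR k)).

Definition tau_term (k w : nat) : R :=
  (INR k - 2 * Delta k (2 * w)) / (4 * (INR w) ^ 2).

Definition is_tau_max (k : nat) (t : R) : Prop :=
  (exists w : nat, (1 <= w)%nat /\ t = tau_term k w) /\
  (forall w : nat, (1 <= w)%nat -> tau_term k w <= t).

Definition tau (k : nat) : R := epsilon (inhabits 0%R) (is_tau_max k).

Definition omega : R :=
  epsilon (inhabits 1%R) (fun w => 1 <= w /\ w - 2 - 1 / w = ln w).

(* Main.v *)
Require Import Defs.
From Stdlib Require Import Reals.
From Stdlib Require Import Lra Lia Psatz ZArith Exp_prop Factorial ClassicalEpsilon.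
Open Scope R_scope.

Lemma E1_le_exp x n : 0 <= x -> E1 x n <= exp x.
Proof.
  intros Hx. apply growing_ineq; [|apply E1_cvg].
  intro m. change (E1 x (S m)) with (E1 x m + / INR (fact (S m)) * x ^ S m).
  assert (0 <= / INR (fact (S m)) * x ^ S m).
  { apply Rmult_le_pos. left; apply Rinv_0_lt_compat, INR_fact_lt_0. apply pow_le; auto. }
  lra.
Qed.

Lemma INR_fact_S n : INR (fact (S n)) = INR (S n) * INR (fact n).
Proof. rewrite <- mult_INR. reflexivity. Qed.

Lemma exp_num : 1 < (27846455/100000000) * exp (1 + 27846455/100000000).
Proof.
  assert (H := E1_le_exp (1 + 27846455/100000000) 14 ltac:(lra)).
  unfold E1 in H. cbv [sum_f_R0] in H.
  rewrite !INR_fact_S in H. cbv [fact] in H. rewrite !S_INR in H. cbv [INR pow] in H.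
  lra.
Qed.

Lemma exp3 : 8 < exp 3.
Proof.
  assert (H := E1_le_exp 3 2 ltac:(lra)).
  unfold E1 in H. cbv [sum_f_R0] in H.
  rewrite !INR_fact_S in H. cbv [fact] in H. rewrite !S_INR in H. cbv [INR pow] in H.
  lra.
Qed.

Lemma mono K a b : 0 < K -> 0 < a -> a < b -> a * exp (a / K) < b * exp (b / K).
Proof.
  intros HK Ha Hab.
  assert (exp (a/K) < exp (b/K)).
  { apply exp_increasing. unfold Rdiv. apply Rmult_lt_compat_r; auto. apply Rinv_0_lt_compat; auto. }
  assert (0 < exp (a/K)) by apply exp_pos.
  nra.
Qed.

Lemma Delta_spec k v : (1 <= k)%nat ->
  0 < Defs.Delta k v /\ Defs.Delta k v * exp (Defs.Delta k v / INR k) = INR k * exp (1 - INR v / INR k).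
Proof.
  intros hk. unfold Defs.Delta. apply epsilon_spec.
  assert (HK : 0 < INR k) by (apply lt_0_INR; lia).
  set (c := INR k * exp (1 - INR v / INR k)).
  assert (Hc : 0 < c) by (unfold c; apply Rmult_lt_0_compat; auto; apply exp_pos).
  assert (Hcont : continuity (fun D => D * exp (D / INR k) - c)) by reg.
  assert (H1 : 0 * exp (0 / INR k) - c < 0) by lra.
  assert (H2 : 0 < c * exp (c / INR k) - c).
  { assert (1 < exp (c / INR k)).
    { rewrite <- exp_0. apply exp_increasing. unfold Rdiv. apply Rmult_lt_0_compat; auto.
      apply Rinv_0_lt_compat; auto. }
    nra. }
  destruct (IVT _ 0 c Hcont Hc H1 H2) as [z [[Hz0 Hzc] Hz]].
  exists z. destruct Hz0 as [Hz0|Hz0].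
  - split; auto. lra.
  - subst z. exfalso. lra.
Qed.

Lemma omega_spec : 1 <= omega /\ omega - 2 - 1 / omega = ln omega.
Proof.
  unfold omega. apply epsilon_spec.
  assert (Hcont : continuity (fun t => exp t - 2 - exp (- t) - t)) by reg.
  assert (H1 : exp 0 - 2 - exp (- 0) - 0 < 0) by (rewrite Ropp_0, exp_0; lra).
  assert (H2 : 0 < exp 3 - 2 - exp (- 3) - 3).
  { assert (exp (-3) < 1). { rewrite <- exp_0. apply exp_increasing. lra. }
    pose proof exp3. lra. }
  destruct (IVT _ 0 3 Hcont ltac:(lra) H1 H2) as [t [[Ht0 Ht3] Ht]].
  exists (exp t). split.
  - rewrite <- exp_0. destruct Ht0 as [Ht0|Ht0]. left; apply exp_increasing; auto. subst; lra.
  - rewrite ln_exp. rewrite exp_Ropp in Ht. unfold Rdiv. lra.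
Qed.

Lemma fin_max (f : nat -> R) N : (1 <= N)%nat ->
  exists w, (1 <= w <= N)%nat /\ forall v, (1 <= v <= N)%nat -> f v <= f w.
Proof.
  induction N as [|N IH]; intros HN; [lia|].
  destruct (Nat.eq_dec N 0) as [->|HN0].
  - exists 1%nat. split; [lia|]. intros v Hv. replace v with 1%nat by lia. lra.
  - destruct (IH ltac:(lia)) as [w [Hw Hmax]].
    destruct (Rle_dec (f (S N)) (f w)) as [Hle|Hlt].
    + exists w. split; [lia|]. intros v Hv.
      destruct (Nat.eq_dec v (S N)) as [->|Hne]; auto. apply Hmax; lia.
    + exists (S N). split; [lia|]. intros v Hv.
      destruct (Nat.eq_dec v (S N)) as [->|Hne]; [lra|].
      specialize (Hmax v ltac:(lia)). lra.
Qed.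

Lemma INR_2w w : INR (2 * w) = 2 * INR w.
Proof. rewrite mult_INR. reflexivity. Qed.

Lemma term_k k : (4 <= k)%nat ->
  tau_term k k >= 1 / ((9027901 / 1000000) * INR k).
Proof.
  intros hk.
  assert (HK : 0 < INR k) by (apply lt_0_INR; lia).
  destruct (Delta_spec k (2 * k) ltac:(lia)) as [Dp De].
  set (D := Defs.Delta k (2 * k)) in *.
  set (s := 27846455/100000000).
  assert (HD : D <= INR k * s).
  { destruct (Rle_dec D (INR k * s)) as [?|Hn]; auto. exfalso.
    assert (Hlt : INR k * s < D) by lra.
    pose proof (mono (INR k) (INR k * s) D HK ltac:(unfold s; nra) Hlt) as Hm.
    rewrite De, INR_2w in Hm.
    replace (INR k * s / INR k) with s in Hm by (field; lra).
    replace (1 - 2 * INR k / INR k) with (-1) in Hm by (field; lra).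
    pose proof exp_num as En.
    replace (exp (1 + 27846455 / 100000000)) with (exp 1 * exp s) in En by (rewrite <- exp_plus; reflexivity).
    assert (exp 1 * exp (-1) = 1) by (rewrite <- exp_plus, Rplus_opp_r, exp_0; reflexivity).
    assert (0 < exp 1) by apply exp_pos.
    assert (0 < exp (-1)) by apply exp_pos.
    assert (0 < exp s) by apply exp_pos.
    fold s in En.
    assert (s * exp s > exp (-1)) by nra.
    nra. }
  unfold tau_term. fold D.
  apply Rle_ge.
  replace (1 / (9027901 / 1000000 * INR k)) with ((1000000 / 9027901) * / INR k) by (field; lra).
  replace ((INR k - 2 * D) / (4 * INR k ^ 2)) with ((INR k - 2 * D) / (4 * INR k) * / INR k)
    by (field; lra).
  apply Rmult_le_compat_r. left; apply Rinv_0_lt_compat; auto.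
  apply (Rmult_le_reg_r (4 * INR k)). lra.
  replace ((INR k - 2 * D) / (4 * INR k) * (4 * INR k)) with (INR k - 2 * D) by (field; lra).
  unfold s in HD. lra.
Qed.

Lemma tau_spec k : (4 <= k)%nat -> forall w, (1 <= w)%nat -> tau_term k w <= tau k.
Proof.
  intros hk.
  assert (HK : 0 < INR k) by (apply lt_0_INR; lia).
  assert (Hex : exists t, is_tau_max k t).
  { set (M := tau_term k k).
    assert (HM : 0 < M).
    { pose proof (term_k k hk). unfold M.
      assert (0 < 1 / (9027901 / 1000000 * INR k)).
      { unfold Rdiv. apply Rmult_lt_0_compat. lra. apply Rinv_0_lt_compat. lra. }
      lra. }
    set (r := INR k / (4 * M)).
    assert (Hr : 0 < r) by (unfold r, Rdiv; apply Rmult_lt_0_compat; auto; apply Rinv_0_lt_compat; lra).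
    destruct (archimed r) as [Hu1 Hu2].
    assert (Hup : (0 <= up r)%Z) by (apply le_IZR; lra).
    set (N := Nat.max k (Z.to_nat (up r))).
    assert (HN : r < INR N).
    { assert (INR (Z.to_nat (up r)) <= INR N) by (apply le_INR; unfold N; lia).
      rewrite INR_IZR_INZ, Z2Nat.id in H; auto. lra. }
    destruct (fin_max (tau_term k) N ltac:(unfold N; lia)) as [w0 [Hw0 Hmax]].
    exists (tau_term k w0). split.
    - exists w0. split; [lia|reflexivity].
    - intros w Hw. destruct (le_lt_dec w N) as [Hle|Hgt].
      + apply Hmax. lia.
      + assert (HkN : tau_term k k <= tau_term k w0) by (apply Hmax; unfold N; lia).
        fold M in HkN.
        destruct (Delta_spec k (2 * w) ltac:(lia)) as [Dp _].
        assert (HW : INR N + 1 <= INR w) by (rewrite <- S_INR; apply le_INR; lia).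
        apply Rle_trans with M; [|exact HkN].
        unfold tau_term.
        set (W := INR w) in *. set (D := Defs.Delta k (2 * w)) in *.
        assert (HW1 : r < W) by lra.
        assert (H4M : INR k < 4 * M * W).
        { unfold r in HW1. apply (Rmult_lt_compat_l (4 * M)) in HW1; [|lra].
          replace (4 * M * (INR k / (4 * M))) with (INR k) in HW1 by (field; lra). lra. }
        assert (HWp : 1 <= W) by (unfold W; apply (le_INR 1); lia).
        assert (Hle : (INR k - 2 * D) / (4 * W ^ 2) <= M).
        { apply (Rmult_le_reg_r (4 * W ^ 2)). nra.
          replace ((INR k - 2 * D) / (4 * W ^ 2) * (4 * W ^ 2)) with (INR k - 2 * D) by (field; lra).
          nra. }
        exact Hle. }
  intros w Hw.
  pose proof (epsilon_spec (inhabits 0) (is_tau_max k) Hex) as Hs.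
  destruct Hs as [_ Hs]. apply Hs; auto.
Qed.

Lemma frac_le a N P Q : 0 < P -> 0 < Q -> a * Q <= N * P -> a / P <= N / Q.
Proof.
  intros HP HQ H.
  replace (a / P) with ((a * Q) * / (P * Q)) by (field; lra).
  replace (N / Q) with ((N * P) * / (P * Q)) by (field; lra).
  apply Rmult_le_compat_r; auto. left; apply Rinv_0_lt_compat; nra.
Qed.

Theorem lemma7p1 (k : nat) (hk : (4 <= k)%nat) :
  tau k >= 1 / ((9027901 / 1000000) * INR k) /\
  tau k >= (1 - 2 / omega) / ((1 - 1 / omega + ln omega + 2 / INR k) ^ 2 * INR k).
Proof.
  assert (HK : 0 < INR k) by (apply lt_0_INR; lia).
  split.
  - pose proof (term_k k hk). pose proof (tau_spec k hk k ltac:(lia)). lra.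
  - destruct omega_spec as [Ho1 Hoe].
    set (o := omega) in *.
    assert (Hln : 0 <= ln o) by (rewrite <- ln_1; destruct Ho1 as [Ho1'|Ho1'];
      [left; apply ln_increasing; lra | rewrite Ho1'; lra]).
    assert (Ho2 : 2 < o).
    { assert (0 <= o - 2 - 1 / o) by lra.
      assert (o * (o - 2 - 1/o) = o*o - 2*o - 1) by (field; lra). nra. }
    assert (Hinv : 0 < 1 / o < 1/2).
    { split. unfold Rdiv; rewrite Rmult_1_l; apply Rinv_0_lt_compat; lra.
      apply (Rmult_lt_reg_r o); [lra|]. replace (1 / o * o) with 1 by (field; lra). lra. }
    set (x0 := 1 - 1 / o + ln o).
    assert (Hx0 : 0 < x0) by (unfold x0; lra).
    set (r := INR k * x0 / 2).
    assert (Hr : 0 < r) by (unfold r; nra).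
    destruct (archimed r) as [Hu1 Hu2].
    assert (Hup : (0 <= up r)%Z) by (apply le_IZR; lra).
    set (w := Z.to_nat (up r)).
    assert (HW : INR w = IZR (up r)) by (unfold w; rewrite INR_IZR_INZ, Z2Nat.id; auto).
    assert (Hw1 : (1 <= w)%nat).
    { destruct w eqn:E; [|lia]. exfalso. simpl in HW. lra. }
    pose proof (tau_spec k hk w Hw1) as Ht.
    apply Rle_ge. eapply Rle_trans; [|exact Ht].
    destruct (Delta_spec k (2 * w) ltac:(lia)) as [Dp De].
    unfold tau_term. set (D := Defs.Delta k (2 * w)) in *.
    set (W := INR w) in *. set (K := INR k) in *.
    assert (HD : D <= K / o).
    { destruct (Rle_dec D (K / o)) as [?|Hn]; auto. exfalso.
      assert (Hlt : K / o < D) by lra.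
      assert (HKo : 0 < K / o) by (unfold Rdiv; apply Rmult_lt_0_compat; auto; apply Rinv_0_lt_compat; lra).
      pose proof (mono K (K / o) D HK HKo Hlt) as Hm.
      rewrite De, INR_2w in Hm. fold W in Hm.
      replace (K / o / K) with (1 / o) in Hm by (field; lra).
      assert (Heo : K / o = K * exp (- ln o)).
      { rewrite exp_Ropp, exp_ln by lra. field; lra. }
      rewrite Heo, Rmult_assoc, <- exp_plus in Hm.
      assert (Hexp : exp (1 - 2 * W / K) <= exp (- ln o + 1 / o)).
      { destruct (Rle_dec (1 - 2 * W / K) (- ln o + 1 / o)) as [[Hl|Hl]|Hl].
        - left; apply exp_increasing; auto.
        - rewrite Hl; lra.
        - exfalso. assert (2 * W / K >= x0) by (assert (W >= r) by lra; unfold r in *;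
            assert (2 * W / K = 2 * W * / K) by reflexivity;
            apply Rle_ge; apply (Rmult_le_reg_r K); auto;
            replace (2 * W / K * K) with (2 * W) by (field; lra); lra).
          unfold x0 in *; lra. }
      nra. }
    set (a := 1 - 2 / o).
    assert (Ha : 0 < a) by (unfold a; assert (2 / o = 2 * (1/o)) by (field; lra); lra).
    set (y := x0 + 2 / K).
    assert (HKy : K * y = K * x0 + 2) by (unfold y; field; lra).
    assert (H2W : 2 * W <= K * y) by (unfold r in *; lra).
    assert (HWp : 1 <= W) by (unfold W; apply (le_INR 1); lia).
    assert (HKa : K * a <= K - 2 * D).
    { assert (K * a = K - 2 * (K / o)) by (unfold a; field; lra). lra. }
    apply frac_le.
    + assert (0 < y) by (unfold y; assert (0 < 2 / K) by (unfold Rdiv; apply Rmult_lt_0_compat; [lra|apply Rinv_0_lt_compat; lra]); lra).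
      apply Rmult_lt_0_compat; auto. apply pow_lt; auto.
    + nra.
    + assert (0 <= 2 * W) by lra.
      assert ((2 * W) ^ 2 <= (K * y) ^ 2) by (apply pow_incr; lra).
      assert (0 <= y ^ 2 * K) by (apply Rmult_le_pos; [apply pow2_ge_0|lra]).
      assert (a * (4 * W ^ 2) <= a * (K * y) ^ 2) by (apply Rmult_le_compat_l; lra).
      assert (K * a * (y ^ 2 * K) <= (K - 2 * D) * (y ^ 2 * K)) by (apply Rmult_le_compat_r; lra).
      assert (a * (K * y) ^ 2 = K * a * (y ^ 2 * K)) by ring.
      lra.
Qed.
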